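(* Let $\mathcal P$ be a family of subsets of a set $X$ with $\mathcal P\subseteq\mathcal P_{seq}$. Then the $\mathcal Q_{\mathcal P}$-topology on $X/\mathcal P$ is Hausdorff.
   Context: $[x]_{\mathcal P}=\{y\in X:\forall V\in\mathcal P\ (x\in V\iff y\in V)\}$, $X/\mathcal P=\{[x]_{\mathcal P}:x\in X\}$, $q(x)=[x]_{\mathcal P}$, and the $\mathcal Q_{\mathcal P}$-topology is the coarsest topology on $X/\mathcal P$ containing all sets $q[V]$, $V\in\mathcal P$. $\mathcal P_{seq}$ is the family of all sets $W$ for which there exist $\{U_n\}_{n\in\omega},\{V_n\}_{n\in\omega}\subseteq\mathcal P$ with $U_k\subseteq X\setminus V_k\subseteq U_{k+1}$ for every $k$ and $\bigcup_nU_n=W$. *)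

(* Defs.v *)
From mathcomp Require Import all_boot.
From mathcomp Require Import boolp classical_sets.
Set Implicit Arguments. Unset Strict Implicit. Unset Printing Implicit Defensive.
Local Open Scope classical_set_scope.

Section QDefs.
Variable T : Type.
Implicit Types (P : set (set T)).

Definition cls P (x : T) : set T :=
  [set y | forall V, P V -> (V x <-> V y)].

Definition quot P : set (set T) := [set c | exists x, c = cls P x].

Definition qmap P (x : T) : set T := cls P x.

Definition is_topology {U : Type} (S : set U) (tau : set (set U)) : Prop :=
  [/\ (forall O, tau O -> O `<=` S),
      tau S,
      (forall F : set (set U), F `<=` tau -> tau (\bigcup_(O in F) O))
    & (forall A B, tau A -> tau B -> tau (A `&` B))].

(* open sets of the Q_P-topology: the coarsest topology on X/P containing all q[V], V in P *)
Definition Q_open P (O : set (set T)) : Prop :=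
  forall tau, is_topology (quot P) tau ->
    (forall V, P V -> tau (qmap P @` V)) -> tau O.

Definition P_seq P : set (set T) :=
  [set W | exists U V : nat -> set T,
     (forall n, P (U n) /\ P (V n)) /\
     (forall k, U k `<=` ~` V k /\ ~` V k `<=` U k.+1) /\
     \bigcup_n U n = W].

End QDefs.

Definition hausdorff {U : Type} (S : set U) (tau : set (set U)) : Prop :=
  forall a b, S a -> S b -> a <> b ->
    exists O1 O2, [/\ tau O1, tau O2, O1 a, O2 b & O1 `&` O2 = set0].

(* Main.v *)
Require Import Defs.
From mathcomp Require Import all_boot.
From mathcomp Require Import boolp classical_sets.
From Stdlib Require Import Classical_Prop.
Local Open Scope classical_set_scope.

Lemma Q_open_basic (T : Type) (P : set (set T)) V :
  P V -> Q_open P (qmap P @` V).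
Proof. by move=> PV tau _ H; apply: H. Qed.

Lemma cls_refl (T : Type) (P : set (set T)) x : cls P x x.
Proof. by move=> V _. Qed.

Lemma sep_aux (T : Type) (P : set (set T)) x y V :
  P `<=` P_seq P -> P V -> V x -> ~ V y ->
  exists O1 O2, [/\ Q_open P O1, Q_open P O2, O1 (cls P x), O2 (cls P y)
                  & O1 `&` O2 = set0].
Proof.
move=> sub PV Vx nVy.
have [U [W [PUW [chain eqV]]]] := sub V PV.
have : V x by [].
rewrite -eqV => -[n _ Uxn].
exists (qmap P @` U n), (qmap P @` W n); split.
- exact: Q_open_basic (proj1 (PUW n)).
- exact: Q_open_basic (proj2 (PUW n)).
- by exists x.
- have nUy : ~ U n.+1 y by move=> h; apply: nVy; rewrite -eqV; exists n.+1.
  exists y => //; apply: NNPP => nWy; apply: nUy; apply: (proj2 (chain n)); exact: nWy.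
- apply/seteqP; split => // c [[u Uu <-] [v Wv eq]].
  have hv : cls P u v by rewrite /qmap in eq; rewrite -eq; exact: cls_refl.
  have := (hv (W n) (proj2 (PUW n))).
  move=> [_ h]; exact: (proj1 (chain n) u Uu (h Wv)).
Qed.

Theorem lemma3 (T : Type) (P : set (set T)) :
  P `<=` P_seq P -> hausdorff (quot P) (Q_open P).
Proof.
move=> sub a b [x ->] [y ->] neq.
have : ~ (forall V, P V -> (V x <-> V y)).
  move=> h; apply: neq; apply/seteqP; split => z hz V PV.
  - by rewrite -(hz V PV); split => ?; apply/(h V PV).
  - by rewrite -(hz V PV); split => ?; apply/(h V PV).
move=> /existsNP [V /not_implyP [PV hV]].
have [Vx|nVx] := pselect (V x).
- have nVy : ~ V y by move=> Vy; apply: hV; split.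
  exact: (@sep_aux T P x y V sub PV Vx nVy).
- have Vy : V y by apply: NNPP => nVy; apply: hV; split => // /nVx.
  have [O1 [O2 [h1 h2 h3 h4 h5]]] := @sep_aux T P y x V sub PV Vy nVx.
  by exists O2, O1; split => //; rewrite setIC.
Qed.
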